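(* Consider a finite discounted stochastic game which is a common interest game. Then for every decision maker $i\in\{1,\dots,N\}$, every $\bm{\pi}^*\in\bm{\Pi}_{\rm opt}$ and every $\tilde{\bm{\pi}}\in\bm{\Pi}\setminus\bm{\Pi}_{\rm opt}$, \[ \sum_{x\in\mathbb{X}} Q^{*i}_{\bm{\pi}^{*-i}}\big(x,\pi^{*i}(x)\big) \;<\; \sum_{x\in\mathbb{X}} Q^{*i}_{\tilde{\bm{\pi}}^{-i}}\big(x,\tilde{\pi}^{i}(x)\big). \]
   Context: A finite discounted stochastic game consists of $N\ge 1$ decision makers DM$^1,\dots,$DM$^N$; a finite state set $\mathbb{X}$; for each $i$ a finite action set $\mathbb{U}^i$, a discount factor $\beta^i\in(0,1)$ and a cost function $c^i:\mathbb{X}\times\mathbb{U}\to\mathbb{R}$, where $\mathbb{U}=\mathbb{U}^1\times\cdots\times\mathbb{U}^N$; and a transition kernel $P(\cdot\mid x,\mathbf{u})$, a probability distribution on $\mathbb{X}$ for each $(x,\mathbf{u})\in\mathbb{X}\times\mathbb{U}$. Let $\Pi^i$ be the set of all maps $\pi^i:\mathbb{X}\to\mathbb{U}^i$ (stationary deterministic policies), $\bm{\Pi}=\Pi^1\times\cdots\times\Pi^N$, $\bm{\Pi}^{-i}=\times_{j\ne i}\Pi^j$, and write $\bm{\pi}=(\pi^i,\bm{\pi}^{-i})$, $\bm{\pi}(x)=(\pi^1(x),\dots,\pi^N(x))$. For $\bm{\pi}\in\bm{\Pi}$ and $x\in\mathbb{X}$, $J^i_x(\bm{\pi})=E\big[\sum_{t\ge0}(\beta^i)^t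 c^i(x_t,\bm{\pi}(x_t))\mid x_0=x\big]$, where $x_{t+1}\sim P(\cdot\mid x_t,\bm{\pi}(x_t))$. For $\bm{\pi}^{-i}\in\bm{\Pi}^{-i}$, $Q^{*i}_{\bm{\pi}^{-i}}\in\mathbb{R}^{\mathbb{X}\times\mathbb{U}^i}$ denotes the optimal Q-factors of the MDP faced by DM$^i$ when the others use $\bm{\pi}^{-i}$, i.e. the unique solution of $Q(x,u^i)=c^i(x,u^i,\bm{\pi}^{-i}(x))+\beta^i\sum_{x'}P(x'\mid x,u^i,\bm{\pi}^{-i}(x))\min_{v\in\mathbb{U}^i}Q(x',v)$. The set of team-optimal policies is $\bm{\Pi}_{\rm opt}=\{\bm{\pi}^*\in\bm{\Pi}: J^i_x(\bm{\pi}^* )=\inf_{\bm{\pi}\in\bm{\Pi}}J^i_x(\bm{\pi})\ \forall i,\forall x\in\mathbb{X}\}$. The game is a common interest game if (i) $\bm{\Pi}_{\rm opt}\neq\emptyset$ and (ii) for every $\tilde{\bm{\pi}}\in\bm{\Pi}\setminus\bm{\Pi}_{\rm opt}$ and every $i$, $\inf_{\bm{\pi}\in\bm{\Pi}}\sum_{x\in\mathbb{X}}J^i_x(\bm{\pi})<\sum_{x\in\mathbb{X}}J^i_x(\tilde{\bm{\pi}})$. *)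

(* Defs.v *)
From mathcomp Require Import all_boot.
From Stdlib Require Import Reals ClassicalEpsilon.

Set Implicit Arguments.
Unset Strict Implicit.
Unset Printing Implicit Defensive.

Definition rsum (T : finType) (f : T -> R) : R := \big[Rplus/0%R]_(x : T) f x.

(* minimum over a (nonempty) finite type; 0 if the type is empty *)
Definition rmin (T : finType) (f : T -> R) : R :=
  match enum T with
  | [::] => 0%R
  | a :: s => foldr (fun y m => Rmin (f y) m) (f a) s
  end.

(* the value of a series sum_t u t when it converges (0 otherwise) *)
Definition series (u : nat -> R) : R :=
  match excluded_middle_informative (exists l, infinite_sum u l) with
  | left h => proj1_sig (constructive_indefinite_description _ h)
  | right _ => 0%R
  end.

Section Game.
Variables (N : nat) (X : finType) (Ui : 'I_N -> finType).

(* joint actions and stationary deterministic policy profiles *)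
Definition jaction := forall i : 'I_N, Ui i.
Definition profile := forall i : 'I_N, X -> Ui i.

Definition prof_act (pi : profile) (x : X) : jaction := fun i => pi i x.

Definition upd_act (i : 'I_N) (ui : Ui i) (a : jaction) : jaction :=
  fun j => match (i =P j) with
           | ReflectT e => ecast j (Ui j) e ui
           | ReflectF _ => a j
           end.

Variables (P : X -> jaction -> X -> R) (c : 'I_N -> X -> jaction -> R)
          (beta : 'I_N -> R).

Fixpoint dist (pi : profile) (x : X) (t : nat) : X -> R :=
  match t with
  | O => fun y => if y == x then 1%R else 0%R
  | S t' => fun y => rsum (fun z => (dist pi x t' z * P z (prof_act pi z) y)%R)
  end.

Definition Jcost (i : 'I_N) (pi : profile) (x : X) : R :=
  series (fun t => (beta i ^ t * rsum (fun y => dist pi x t y * c i y (prof_act pi y)))%R).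

(* Q is the optimal Q-factor of DM i's MDP when the others use pi^{-i}
   (the unique solution of the Bellman optimality equation) *)
Definition is_Qstar (i : 'I_N) (pi : profile) (Q : X -> Ui i -> R) : Prop :=
  forall x ui,
    Q x ui = (c i x (upd_act ui (prof_act pi x))
              + beta i * rsum (fun x' => P x (upd_act ui (prof_act pi x)) x'
                                         * rmin (Q x')))%R.

Definition team_opt (pis : profile) : Prop :=
  forall i x (pi : profile), (Jcost i pis x <= Jcost i pi x)%R.

Definition common_interest : Prop :=
  (exists pis, team_opt pis) /\
  forall (pit : profile), ~ team_opt pit ->
    forall i, exists pi : profile,
      (rsum (fun x => Jcost i pi x) < rsum (fun x => Jcost i pit x))%R.

End Game.

(* Main.v *)
From HB Require Import structures.
Require Import Defs.
From mathcomp Require Import all_boot.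
From Stdlib Require Import Reals Lra ClassicalEpsilon FunctionalExtensionality.
From Coquelicot Require Import Coquelicot.

Set Implicit Arguments.
Unset Strict Implicit.

HB.instance Definition _ := Monoid.isComLaw.Build R 0%R Rplus (fun a b c => esym (Rplus_assoc a b c)) Rplus_comm Rplus_0_l.
HB.instance Definition _ := Monoid.isMulLaw.Build R 0%R Rmult Rmult_0_l Rmult_0_r.
HB.instance Definition _ := Monoid.isAddLaw.Build R Rmult Rplus Rmult_plus_distr_r Rmult_plus_distr_l.

Open Scope R_scope.

Section RS.
Variable T : finType.
Implicit Types f g : T -> R.

Lemma rsum_le f g : (forall x, f x <= g x) -> rsum f <= rsum g.
Proof. move=> H; rewrite /rsum; apply: (big_ind2 (fun a b => a <= b)) => //; try lra.
by move=> *; apply Rplus_le_compat. Qed.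

Lemma rsum_plus f g : rsum (fun x => f x + g x) = rsum f + rsum g.
Proof. by rewrite /rsum big_split. Qed.

Lemma rsum_scal a f : rsum (fun x => a * f x) = a * rsum f.
Proof. by rewrite /rsum big_distrr. Qed.

Lemma rsum_0 : rsum (fun _ : T => 0) = 0.
Proof. by rewrite /rsum big1. Qed.

Lemma rsum_opp f : rsum (fun x => - f x) = - rsum f.
Proof. have := rsum_plus f (fun x => - f x).
have -> : rsum (fun x => f x + - f x) = 0 by rewrite -rsum_0 /rsum; apply: eq_bigr => x _; lra.
lra. Qed.

Lemma rsum_minus f g : rsum (fun x => f x - g x) = rsum f - rsum g.
Proof. rewrite /Rminus -rsum_opp -rsum_plus //. Qed.

Lemma rsum_ext f g : (forall x, f x = g x) -> rsum f = rsum g.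
Proof. by move=> H; rewrite /rsum; apply: eq_bigr => x _. Qed.

Lemma rsum_single f x : (forall y, 0 <= f y) -> f x <= rsum f.
Proof. move=> H; rewrite /rsum (bigD1 x) //=.
have : 0 <= \big[Rplus/0]_(i | i != x) f i.
  by apply: big_ind => //; [lra| move=> *; lra].
lra. Qed.

Lemma rsum_ind x f : rsum (fun z => (if z == x then 1 else 0) * f z) = f x.
Proof. rewrite /rsum (bigD1 x) //= eqxx big1 ?Rplus_0_r ?Rmult_1_l //.
by move=> y /negbTE ->; rewrite Rmult_0_l. Qed.

Lemma rsum_ind_r x f : rsum (fun z => f z * (if z == x then 1 else 0)) = f x.
Proof. rewrite -(rsum_ind x f); apply rsum_ext => z; lra. Qed.

Lemma rsum_nonneg_zero f x : (forall y, 0 <= f y) -> rsum f <= 0 -> f x = 0.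
Proof. move=> H1 H2; have := rsum_single x H1; have := H1 x; lra. Qed.

Lemma rsum_abs f : Rabs (rsum f) <= rsum (fun x => Rabs (f x)).
Proof. rewrite /rsum; apply: (big_ind2 (fun a b => Rabs a <= b)).
- rewrite Rabs_R0; lra.
- move=> a b c' d H1 H2; eapply Rle_trans; [apply Rabs_triang| lra].
- move=> *; lra. Qed.

End RS.

Lemma rsum_exch (T U : finType) (f : T -> U -> R) :
  rsum (fun x => rsum (fun y => f x y)) = rsum (fun y => rsum (fun x => f x y)).
Proof. by rewrite /rsum exchange_big. Qed.

Lemma fold_le (T : eqType) (f : T -> R) a s v : v \in a :: s ->
  foldr (fun y m => Rmin (f y) m) (f a) s <= f v.
Proof.
elim: s => [|b s IH] /=.
  by rewrite inE => /eqP ->; lra.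
rewrite !inE => /orP [/eqP Ev| /orP [/eqP ->|Hv]].
- subst v; eapply Rle_trans; [apply Rmin_r| apply IH; rewrite inE eqxx //].
- apply Rmin_l.
- eapply Rle_trans; [apply Rmin_r| apply IH; rewrite inE Hv orbT //].
Qed.

Lemma fold_ex (T : eqType) (f : T -> R) a s :
  exists2 v, v \in a :: s & foldr (fun y m => Rmin (f y) m) (f a) s = f v.
Proof.
elim: s => [|b s [v Hv E]] /=.
  by exists a; rewrite ?inE ?eqxx.
rewrite E /Rmin; case: Rle_dec => _.
  by exists b; rewrite ?inE ?eqxx ?orbT.
exists v => //; move: Hv; rewrite !inE => /orP [->|->]; rewrite ?orbT //.
Qed.

Lemma rmin_le (T : finType) (f : T -> R) v : rmin f <= f v.
Proof.
rewrite /rmin; have : v \in enum T by rewrite mem_enum.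
case: (enum T) => // a s; exact: fold_le.
Qed.

Lemma rmin_ex (T : finType) (f : T -> R) (v0 : T) : exists v, rmin f = f v.
Proof.
rewrite /rmin; have : v0 \in enum T by rewrite mem_enum.
case: (enum T) => // a s _; case: (fold_ex f a s) => v _ E; by exists v.
Qed.

Lemma fin_max (T : finType) (f : T -> R) (x : T) : exists x0, forall y, f y <= f x0.
Proof.
case: (rmin_ex (fun y => - f y) x) => v E; exists v => y.
have := rmin_le (fun y => - f y) y; rewrite E; lra.
Qed.
Section MC.
Variables (X : finType) (K : X -> X -> R) (cc : X -> R) (b : R).
Hypothesis K0 : forall x y, 0 <= K x y.
Hypothesis K1 : forall x, rsum (fun y => K x y) = 1.
Hypothesis b01 : 0 < b < 1.

Fixpoint dd (x : X) (t : nat) : X -> R :=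
  match t with
  | O => fun y => if y == x then 1 else 0
  | S t' => fun y => rsum (fun z => dd x t' z * K z y)
  end.

Lemma rsum_scal_r (T : finType) (f : T -> R) a : rsum (fun x => f x * a) = rsum f * a.
Proof. rewrite Rmult_comm -rsum_scal; apply rsum_ext => x; lra. Qed.

Lemma dd_ge0 x t y : 0 <= dd x t y.
Proof. elim: t y => [|t IH] y /=; first by case: eqP; lra.
rewrite -(rsum_0 X); apply rsum_le => z; apply Rmult_le_pos; auto. Qed.

Lemma dd_sum1 x t : rsum (dd x t) = 1.
Proof. elim: t => [|t IH] /=.
  rewrite (rsum_ext (g := fun z => (if z == x then 1 else 0) * (fun _ => 1) z)).
    by rewrite rsum_ind.
  by move=> z /=; rewrite Rmult_1_r.
rewrite rsum_exch -IH; apply rsum_ext => z; rewrite rsum_scal K1; lra. Qed.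

Lemma dd_le1 x t y : dd x t y <= 1.
Proof. rewrite -(dd_sum1 x t); apply rsum_single => ?; apply dd_ge0. Qed.

Lemma dd_S x t y : dd x t.+1 y = rsum (fun z => dd x t z * K z y).
Proof. by []. Qed.

Lemma dd_CK0 x y : dd x 1 y = rsum (fun z => K x z * dd z 0 y).
Proof.
  rewrite /= rsum_ind (rsum_ext (g := fun z => K x z * (if z == y then 1 else 0))).
    by rewrite rsum_ind_r.
  by move=> z; rewrite eq_sym.

Qed.
Lemma dd_CKS t : (forall x y, dd x t.+1 y = rsum (fun z => K x z * dd z t y)) ->
  forall x y, dd x t.+2 y = rsum (fun z => K x z * dd z t.+1 y).
Proof.
move=> IH x y.
rewrite (dd_S x t.+1 y).
have E : forall z, dd x t.+1 z * K z y = rsum (fun w => K x w * (dd w t z * K z y)).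
  move=> z. rewrite IH -rsum_scal_r. 
  apply rsum_ext => w. lra.
rewrite (rsum_ext E) rsum_exch. apply rsum_ext => w. rewrite rsum_scal dd_S //.

Qed.
Lemma dd_CK t x y : dd x t.+1 y = rsum (fun z => K x z * dd z t y).
Proof.
move: x y; elim: t => [|t IH]; first exact: dd_CK0.
exact: dd_CKS.
Qed.
Definition aa t x := rsum (fun y => dd x t y * cc y).

Lemma aa_0 x : aa 0 x = cc x.
Proof. by rewrite /aa /= rsum_ind. Qed.

Lemma aa_S t x : aa t.+1 x = rsum (fun z => K x z * aa t z).
Proof.
rewrite /aa.
transitivity (rsum (fun y => rsum (fun z => K x z * (dd z t y * cc y)))).
  apply rsum_ext => y; rewrite dd_CK -rsum_scal_r; apply rsum_ext => w; lra.
rewrite rsum_exch; apply rsum_ext => w; rewrite rsum_scal //.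
Qed.

Definition MM := rsum (fun y => Rabs (cc y)).

Lemma aa_bound t x : Rabs (aa t x) <= MM.
Proof. eapply Rle_trans; first apply rsum_abs.
apply rsum_le => y; rewrite Rabs_mult Rabs_pos_eq; last apply dd_ge0.
have := dd_le1 x t y; have := dd_ge0 x t y; have := Rabs_pos (cc y); nra. Qed.

Lemma ex_aa x : ex_series (fun t => b ^ t * aa t x).
Proof.
apply: (@ex_series_le _ _ _ (fun t => MM * b ^ t)).
  move=> n; change (Rabs (b ^ n * aa n x) <= MM * b ^ n).
  rewrite Rabs_mult Rabs_pos_eq; last (apply pow_le; lra).
  have := aa_bound n x; have : 0 <= b ^ n by apply pow_le; lra. nra.
apply: (@ex_series_scal_l _ _ MM (fun t => b ^ t)); apply ex_series_geom.
rewrite Rabs_pos_eq; lra.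
Qed.

Lemma series_Series u : ex_series u -> series u = Series u.
Proof.
move=> [l Hl]; rewrite /series; case: excluded_middle_informative => H.
  case: constructive_indefinite_description => l' /= Hl'.
  by symmetry; apply is_series_unique; apply/is_series_Reals.
by exfalso; apply H; exists l; apply/is_series_Reals.
Qed.

Lemma ex_series0 : ex_series (fun _ : nat => 0).
Proof.
have H : ex_series (fun n => scal 0 ((/2) ^ n)).
  apply: ex_series_scal_l; apply ex_series_geom; rewrite Rabs_pos_eq; lra.
apply: ex_series_ext H => n; rewrite /scal /= /mult /=; lra.
Qed.

Lemma Series_big (T : Type) (f : T -> nat -> R) (s : seq T) :
  (forall z, ex_series (f z)) ->
  ex_series (fun k => \big[Rplus/0]_(z <- s) f z k) /\
  Series (fun k => \big[Rplus/0]_(z <- s) f z k) = \big[Rplus/0]_(z <- s) Series (f z).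
Proof.
move=> H; elim: s => [|z s [IH1 IH2]].
  rewrite big_nil; split.
    by apply: ex_series_ext ex_series0 => n; rewrite big_nil.
  rewrite (Series_ext _ (fun n => 0 * 0)); first by rewrite Series_scal_l; lra.
  by move=> n; rewrite big_nil; lra.
rewrite big_cons; split.
  apply: ex_series_ext (ex_series_plus _ _ (H z) IH1) => n; by rewrite big_cons.
rewrite -IH2 -Series_plus //; apply Series_ext => n; by rewrite big_cons.
Qed.

Lemma Series_rsum (f : X -> nat -> R) :
  (forall z, ex_series (f z)) ->
  Series (fun k => rsum (fun z => f z k)) = rsum (fun z => Series (f z)).
Proof. move=> H; exact: (Series_big (index_enum X) H).2. Qed.

Definition Jg x := series (fun t => b ^ t * aa t x).

Lemma Jg_fix x : Jg x = cc x + b * rsum (fun z => K x z * Jg z).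
Proof.
rewrite /Jg series_Series; last apply ex_aa.
rewrite Series_incr_1; last apply ex_aa.
rewrite pow_O aa_0 Rmult_1_l; congr (_ + _).
rewrite (Series_ext _ (fun k => b * rsum (fun z => K x z * (b ^ k * aa k z)))).
  rewrite Series_scal_l Series_rsum.
    congr (_ * _); apply rsum_ext => z; rewrite series_Series ?Series_scal_l //; apply ex_aa.
  move=> z; apply: ex_series_ext (ex_series_scal_l (K x z) _ (ex_aa z)) => n.
  by rewrite /scal /= /mult.
move=> n; rewrite aa_S -rsum_scal -rsum_scal /=; apply rsum_ext => z; lra.
Qed.

Lemma contract (D : X -> R) :
  (forall x, D x <= b * rsum (fun y => K x y * D y)) -> forall x, D x <= 0.
Proof.
move=> H x; case: (fin_max D x) => x0 Hx0.
suff : D x0 <= 0 by have := Hx0 x; lra.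
have : rsum (fun y => K x0 y * D y) <= D x0.
  rewrite -[X in _ <= X]Rmult_1_l -(K1 x0) -rsum_scal_r.
  apply rsum_le => y; apply Rmult_le_compat_l; auto.
have := H x0; nra.
Qed.

Lemma cmp_le (W : X -> R) :
  (forall x, W x <= cc x + b * rsum (fun y => K x y * W y)) -> forall x, W x <= Jg x.
Proof.
move=> H x; suff : W x - Jg x <= 0 by lra.
apply: (contract (D := fun x => W x - Jg x)) => {}x.
rewrite (rsum_ext (g := fun y => K x y * W y - K x y * Jg y)); last by move=> y; lra.
rewrite rsum_minus; have := H x; have := Jg_fix x; lra.
Qed.

Lemma cmp_ge (W : X -> R) :
  (forall x, cc x + b * rsum (fun y => K x y * W y) <= W x) -> forall x, Jg x <= W x.
Proof.
move=> H x; suff : Jg x - W x <= 0 by lra.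
apply: (contract (D := fun x => Jg x - W x)) => {}x.
rewrite (rsum_ext (g := fun y => K x y * Jg y - K x y * W y)); last by move=> y; lra.
rewrite rsum_minus; have := H x; have := Jg_fix x; lra.
Qed.

End MC.

Section Game2.
Variables (N : nat) (X : finType) (Ui : 'I_N -> finType)
  (P : X -> jaction Ui -> X -> R) (c : 'I_N -> X -> jaction Ui -> R)
  (beta : 'I_N -> R).

Definition pupd (pi : profile X Ui) (i : 'I_N) (s : X -> Ui i) : profile X Ui :=
  fun j => match i =P j with
           | ReflectT e => ecast j (X -> Ui j) e s
           | ReflectF _ => pi j end.

Lemma prof_pupd pi i (s : X -> Ui i) x :
  prof_act (pupd pi s) x = upd_act (s x) (prof_act pi x).
Proof.
apply functional_extensionality_dep => j; rewrite /prof_act /pupd /upd_act.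
case: (i =P j) => [e|//]; by case: j / e.
Qed.

Lemma upd_self (pi : profile X Ui) i x :
  upd_act (pi i x) (prof_act pi x) = prof_act pi x.
Proof.
apply functional_extensionality_dep => j; rewrite /prof_act /upd_act.
case: (i =P j) => [e|//]; by case: j / e.
Qed.

Definition KK (pi : profile X Ui) z y := P z (prof_act pi z) y.
Definition CC i (pi : profile X Ui) y := c i y (prof_act pi y).

Lemma dist_dd pi x t y : Defs.dist P pi x t y = dd (KK pi) x t y.
Proof.
move: y; elim: t => [|t IH] y //.
have -> : Defs.dist P pi x t.+1 y = rsum (fun z => Defs.dist P pi x t z * P z (prof_act pi z) y) by [].
rewrite dd_S; apply rsum_ext => z; rewrite IH //.
Qed.

Lemma J_Jg i pi x : Jcost P c beta i pi x = Jg (KK pi) (CC i pi) (beta i) x.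
Proof.
rewrite /Jcost /Jg /aa; f_equal; apply functional_extensionality => t; f_equal.
apply rsum_ext => y; rewrite dist_dd //.
Qed.

Hypothesis Hb : forall i, 0 < beta i < 1.
Hypothesis HP0 : forall x a y, 0 <= P x a y.
Hypothesis HP1 : forall x a, rsum (fun y => P x a y) = 1.

Lemma Jle i pi (W : X -> R) :
  (forall x, W x <= c i x (prof_act pi x) + beta i * rsum (fun y => P x (prof_act pi x) y * W y)) ->
  forall x, W x <= Jcost P c beta i pi x.
Proof.
move=> H x; rewrite J_Jg; apply: cmp_le => //.
- by move=> *; apply HP0.
- by move=> z; apply HP1.
Qed.

Lemma Jge i pi (W : X -> R) :
  (forall x, c i x (prof_act pi x) + beta i * rsum (fun y => P x (prof_act pi x) y * W y) <= W x) ->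
  forall x, Jcost P c beta i pi x <= W x.
Proof.
move=> H x; rewrite J_Jg; apply: cmp_ge => //.
- by move=> *; apply HP0.
- by move=> z; apply HP1.
Qed.

End Game2.
Close Scope R_scope.

Theorem lemma1 (N : nat) (X : finType) (Ui : 'I_N -> finType)
  (P : X -> jaction Ui -> X -> R) (c : 'I_N -> X -> jaction Ui -> R)
  (beta : 'I_N -> R) :
  (0 < N)%N ->
  (forall i, 0 < beta i < 1)%R ->
  (forall x a y, 0 <= P x a y)%R ->
  (forall x a, rsum (fun y => P x a y) = 1)%R ->
  common_interest P c beta ->
  forall (i : 'I_N) (pis pit : profile X Ui),
    team_opt P c beta pis -> ~ team_opt P c beta pit ->
    forall (Qs Qt : X -> Ui i -> R),
      is_Qstar P c beta pis Qs -> is_Qstar P c beta pit Qt ->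
      (rsum (fun x => Qs x (pis i x)) < rsum (fun x => Qt x (pit i x)))%R.
Proof.
Local Open Scope R_scope.
move=> _ Hb HP0 HP1 [_ HCI] i pis pit Hs Ht Qs Qt HQs HQt.
have Hbi := Hb i.
have S1 : forall x, Qs x (pis i x) <= Jcost P c beta i pis x.
  apply: Jle => // x; rewrite HQs upd_self.
  apply Rplus_le_compat_l; apply Rmult_le_compat_l; first lra.
  apply rsum_le => y; apply Rmult_le_compat_l; first by apply HP0.
  apply rmin_le.
have Hex : forall x, exists v, rmin (Qt x) = Qt x v.
  by move=> x; apply: rmin_ex (pit i x).
pose sg x := proj1_sig (constructive_indefinite_description _ (Hex x)).
have Hsg : forall x, rmin (Qt x) = Qt x (sg x).
  by move=> x; rewrite /sg; case: constructive_indefinite_description.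
have S2 : forall x, Jcost P c beta i (pupd pit sg) x <= rmin (Qt x).
  apply: Jge => // x; rewrite prof_pupd [X in _ <= X]Hsg [X in _ <= X]HQt; lra.
have S3 : forall x, Jcost P c beta i pis x <= rmin (Qt x).
  move=> x; apply: Rle_trans (S2 x); apply Hs.
have S4 : forall x, rmin (Qt x) <= Qt x (pit i x) by move=> x; apply rmin_le.
apply Rnot_le_lt => Hle.
have Hsum : rsum (fun x => Qt x (pit i x) - Jcost P c beta i pis x) <= 0.
  rewrite rsum_minus.
  have := rsum_le S1; lra.
have Heq : forall x, Qt x (pit i x) = Jcost P c beta i pis x.
  move=> x; have := @rsum_nonneg_zero _ (fun x => Qt x (pit i x) - Jcost P c beta i pis x) x.
  move=> H; have := H (fun y => ltac:(have := S3 y; have := S4 y; lra)) Hsum; lra.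
have S5 : forall x, Jcost P c beta i pit x <= Qt x (pit i x).
  apply: Jge => // x.
  rewrite [X in _ <= X]HQt upd_self.
  apply Rplus_le_compat_l; apply Rmult_le_compat_l; first lra.
  apply rsum_le => y; apply Rmult_le_compat_l; first by apply HP0.
  rewrite Heq; apply S3.
case: (HCI pit Ht i) => pi Hpi.
have A0 : rsum (fun x => Jcost P c beta i pi x) < rsum (fun x => Jcost P c beta i pit x) := Hpi.
have A1 : rsum (fun x => Jcost P c beta i pit x) <= rsum (fun x => Qt x (pit i x)).
  exact: rsum_le S5.
have A2 : rsum (fun x => Qt x (pit i x)) = rsum (fun x => Jcost P c beta i pis x).
  by apply rsum_ext.
have A3 : rsum (fun x => Jcost P c beta i pis x) <= rsum (fun x => Jcost P c beta i pi x).
  by apply rsum_le => x; apply Hs.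
lra.
Qed.
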